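(* For every weight function $w$, every $n\ge1$ and every $1\le i\le n$, $$\xi_i(0)=\max_{-1<z_1<\dots<z_{i-1}<1}\ \min_{\substack{p\in S\\ p(z_1)=\dots=p(z_{i-1})=0}}\frac{\int_{-1}^1 t\,p(t)w(t)\,dt}{\int_{-1}^1 p(t)w(t)\,dt},$$ where $S$ is the set of all nonzero polynomials $p$ of degree at most $2n-2$ with $p\ge0$ on $[-1,1]$.
   Context: A weight function is a non-negative integrable function $w$ on $[-1,1]$ with nonzero integral. $\xi_1(0)<\dots<\xi_n(0)$ denote the zeros of the orthonormal polynomial of degree $n$ with respect to $w(t)\,dt$ on $[-1,1]$. *)

(* Defs.v *)
From HB Require Import structures.
From mathcomp Require Import all_boot all_order all_algebra.
From mathcomp Require Import all_classical all_reals all_analysis.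
Set Implicit Arguments. Unset Strict Implicit. Unset Printing Implicit Defensive.
Import Order.TTheory GRing.Theory Num.Theory.
Import numFieldNormedType.Exports.
Local Open Scope classical_set_scope.
Local Open Scope ring_scope.

Section Defs.
Variable R : realType.

Definition I11 : set R := `[(-1)%R, 1%R].

Definition int11 (f : R -> R) : R :=
  \int[@lebesgue_measure R]_(t in I11) f t.

Definition weight (w : R -> R) : Prop :=
  (forall t, I11 t -> 0 <= w t) /\
  (@lebesgue_measure R).-integrable I11 (fun t => (w t)%:E) /\
  int11 w != 0.

Definition is_orthonormal_poly (w : R -> R) (n : nat) (P : {poly R}) : Prop :=
  size P = n.+1 /\ 0 < lead_coef P /\
  (forall q : {poly R}, (size q <= n)%N ->
      int11 (fun t => P.[t] * q.[t] * w t) = 0) /\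
  int11 (fun t => P.[t] ^+ 2 * w t) = 1.

Definition Spos (n : nat) : set {poly R} :=
  [set p : {poly R} | p != 0 /\ (size p <= (2 * n).-1)%N /\
           forall t, I11 t -> 0 <= p.[t]].

Definition ratio (w : R -> R) (p : {poly R}) : R :=
  int11 (fun t => t * p.[t] * w t) / int11 (fun t => p.[t] * w t).

Definition admissible (m : nat) (z : 'I_m -> R) : Prop :=
  (forall j, -1 < z j < 1) /\ (forall j k : 'I_m, (j < k)%N -> z j < z k).

Definition ratios (w : R -> R) (n m : nat) (z : 'I_m -> R) : set R :=
  [set ratio w p | p in [set p : {poly R} | Spos n p /\ forall j, p.[z j] = 0]].

Definition is_min (A : set R) (x : R) : Prop :=
  A x /\ forall y, A y -> x <= y.

End Defs.

(* Main.v *)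
Require Import Defs.
From HB Require Import structures.
From mathcomp Require Import all_boot all_order all_algebra.
From mathcomp Require Import all_classical all_reals all_analysis.
From mathcomp Require Import zify ring lra.
Import Order.TTheory GRing.Theory Num.Theory.
Import numFieldNormedType.Exports.
Local Open Scope classical_set_scope.
Local Open Scope ring_scope.
Set Implicit Arguments. Unset Strict Implicit. Unset Printing Implicit Defensive.
Section Basics.
Variable R : realType.
Variable w : R -> R.
Hypothesis hw : weight w.

Lemma mI11 : measurable ((@I11 R)).
Proof. exact: measurable_itv. Qed.

Lemma horner_bounded (p : {poly R}) : [bounded p.[x] | x in (@I11 R)].
Proof.
have : bounded_set (horner p @` (@I11 R)).
  apply: compact_bounded; apply: continuous_compact; last exact: segment_compact.
  by apply: continuous_subspaceT => x; exact: continuous_horner.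
move=> /= H; move: H; rewrite /bounded_near; apply: filterS => M HM x Ix; apply: HM; by exists x.
Qed.

Lemma intg (p : {poly R}) :
  (@lebesgue_measure R).-integrable ((@I11 R)) (EFin \o (fun t => p.[t] * w t)).
Proof.
have := @integrableMr _ _ _ (@lebesgue_measure R) _ mI11 (horner p) (fun t => (w t)%:E).
move=> /(_ (@measurable_poly R p _) (horner_bounded p) hw.2.1).
by apply: eq_integrable => //; exact: mI11.
Qed.

Definition Iw (p : {poly R}) := int11 (fun t => p.[t] * w t).

Lemma IwD p q : Iw (p + q) = Iw p + Iw q.
Proof.
rewrite /Iw /int11 -RintegralD //; [|exact: mI11|exact: intg|exact: intg].
by apply: eq_Rintegral => x _; rewrite hornerD mulrDl.
Qed.

Lemma IwZ c p : Iw (c *: p) = c * Iw p.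
Proof.
rewrite /Iw /int11 -RintegralZl //; [|exact: mI11|exact: intg].
by apply: eq_Rintegral => x _; rewrite hornerZ mulrA.
Qed.

Lemma IwN p : Iw (- p) = - Iw p.
Proof. by rewrite -scaleN1r IwZ mulN1r. Qed.

Lemma IwB p q : Iw (p - q) = Iw p - Iw q.
Proof. by rewrite IwD IwN. Qed.

Lemma Iw0 : Iw 0 = 0.
Proof. by rewrite -(scale0r 0) IwZ mul0r. Qed.

Lemma Iw_sum (I : Type) (s : seq I) (F : I -> {poly R}) :
  Iw (\sum_(k <- s) F k) = \sum_(k <- s) Iw (F k).
Proof.
elim: s => [|a s IH]; first by rewrite !big_nil Iw0.
by rewrite !big_cons IwD IH.
Qed.

Lemma Iw_le p q : (forall t, (@I11 R) t -> p.[t] <= q.[t]) -> Iw p <= Iw q.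
Proof.
move=> pq; rewrite /Iw /int11; apply: le_Rintegral; [exact: mI11|exact: intg|exact: intg|].
by move=> x Ix; rewrite ler_wpM2r //; [exact: hw.1|exact: pq].
Qed.

Lemma Iw_ge0 p : (forall t, (@I11 R) t -> 0 <= p.[t]) -> 0 <= Iw p.
Proof. by move=> h; rewrite -Iw0; apply: Iw_le => t It; rewrite horner0 h. Qed.

End Basics.
Lemma dbl_root (R : realType) (s : {poly R}) (a : R) : -1 < a < 1 ->
  (forall t : R, -1 <= t <= 1 -> 0 <= (('X - a%:P) * s).[t]) -> s.[a] = 0.
Proof.
move=> /andP[ha1 ha2] hp.
have hcont : horner s x @[x --> a] --> s.[a] := @continuous_horner _ s a.
apply/eqP; apply: contraT; rewrite neq_lt => /orP[lt|gt].
- have := cvgr_lt _ hcont _ lt; move=> /(_ _) /nbhs_ballP[e /= e0 He].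
  set d := Num.min (e / 2) ((1 - a) / 2).
  have d0 : 0 < d by rewrite lt_min !divr_gt0 // subr_gt0.
  have d1 : d <= (1 - a) / 2 by rewrite ge_min lexx orbT.
  have d2 : d <= e / 2 by rewrite ge_min lexx.
  have hs : s.[a + d] < 0.
    apply: He; rewrite -ball_normE /ball_ /= opprD addrA subrr add0r normrN.
    rewrite gtr0_norm //; apply: (le_lt_trans d2); rewrite ltr_pdivrMr //; lra.
  have := hp (a + d); rewrite hornerM hornerXsubC addrAC subrr add0r.
  have -> : -1 <= a + d <= 1 by apply/andP; split; lra.
  move=> /(_ isT); rewrite pmulr_rge0 //; by rewrite leNgt hs.
- have := cvgr_gt _ hcont _ gt; move=> /(_ _) /nbhs_ballP[e /= e0 He].
  set d := Num.min (e / 2) ((1 + a) / 2).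
  have d0 : 0 < d by rewrite lt_min !divr_gt0 //; lra.
  have d1 : d <= (1 + a) / 2 by rewrite ge_min lexx orbT.
  have d2 : d <= e / 2 by rewrite ge_min lexx.
  have hs : 0 < s.[a - d].
    apply: He; rewrite -ball_normE /ball_ /=; have -> : a - (a - d) = d by ring.
    rewrite gtr0_norm //; apply: (le_lt_trans d2); rewrite ltr_pdivrMr //; lra.
  have := hp (a - d); rewrite hornerM hornerXsubC addrAC subrr add0r.
  have -> : -1 <= a - d <= 1 by apply/andP; split; lra.
  move=> /(_ isT); rewrite nmulr_rge0 ?oppr_lt0 //; by rewrite leNgt hs.
Qed.
Section Vec.
Variable R : realType.
Variable N : nat.

Definition pc (c : 'rV[R]_N) : {poly R} := \sum_(i < N) c ord0 i *: 'X^i.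
Definition vc (p : {poly R}) : 'rV[R]_N := \row_(i < N) p`_i.

Lemma pc_coef c (k : 'I_N) : (pc c)`_k = c ord0 k.
Proof.
rewrite /pc coef_sum (bigD1 k) //= coefZ coefXn eqxx mulr1 big1 ?addr0 //.
move=> j jk; rewrite coefZ coefXn.
have -> : (nat_of_ord k == nat_of_ord j) = false.
  by apply/negbTE; rewrite eq_sym.
by rewrite mulr0.
Qed.

Lemma pc_size c : (size (pc c) <= N)%N.
Proof.
rewrite /pc; apply: (leq_trans (size_sum _ _ _)); apply/bigmax_leqP => k _.
apply: (leq_trans (size_scale_leq _ _)); by rewrite size_polyXn.
Qed.

Lemma pc_eq0 c : pc c = 0 -> c = 0.
Proof.
move=> h; apply/rowP => k; rewrite mxE -pc_coef h coef0 //.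
Qed.

Lemma pcZ a c : pc (a *: c) = a *: pc c.
Proof.
rewrite /pc scaler_sumr; apply: eq_bigr => k _; by rewrite mxE scalerA.
Qed.

Lemma pcK (p : {poly R}) : (size p <= N)%N -> pc (vc p) = p.
Proof.
move=> sp; rewrite /pc.
under eq_bigr do rewrite mxE.
rewrite -poly_def; apply/polyP => k; rewrite coef_poly; case: ltnP => // hk.
by rewrite nth_default // (leq_trans sp hk).
Qed.

Lemma pc_horner c t : (pc c).[t] = \sum_(i < N) c ord0 i * t ^+ i.
Proof.
rewrite /pc horner_sum; apply: eq_bigr => k _; by rewrite hornerZ hornerXn.
Qed.

Lemma lin_cont (a : 'I_N -> R) (s : seq 'I_N) :
  continuous (fun c : 'rV[R]_N => \sum_(i <- s) c ord0 i * a i).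
Proof.
move=> x; elim: s => [|j s IH].
  have -> : (fun c : 'rV[R]_N => \sum_(i <- [::]) c ord0 i * a i) = cst 0.
    by apply: funext => c; rewrite big_nil.
  exact: cst_continuous.
have -> : (fun c : 'rV[R]_N => \sum_(i <- j :: s) c ord0 i * a i) =
   (fun c => c ord0 j * a j + \sum_(i <- s) c ord0 i * a i).
  by apply: funext => c; rewrite big_cons.
apply: (continuousD (f := fun c : 'rV[R]_N => c ord0 j * a j)); last exact: IH.
apply: (continuousM (s := fun c : 'rV[R]_N => c ord0 j) (t := cst (a j))); first exact: coord_continuous.
exact: cst_continuous.
Qed.

End Vec.

Lemma sqp_props (R : realType) (s : seq R) :
  let p := (\prod_(x <- s) ('X - x%:P)) ^+ 2 in
  [/\ p != 0, size p = (2 * (size s).+1).-1, (forall t, 0 <= p.[t]),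
      (forall x, x \in s -> p.[x] = 0) & (forall x, x \notin s -> p.[x] != 0)].
Proof.
move=> p; set Q := \prod_(x <- s) ('X - x%:P).
have mQ : Q \is monic by exact: monic_prod_XsubC.
have Q0 : Q != 0 by exact: monic_neq0.
have hr x : (Q.[x] == 0) = (x \in s) by rewrite -root_prod_XsubC.
split.
- by rewrite /p expf_neq0.
- rewrite /p expr2 size_Mmonic // size_prod_XsubC.
  by rewrite mul2n -addnn.
- by move=> t; rewrite /p horner_exp sqr_ge0.
- move=> x xs; rewrite /p horner_exp; have /eqP -> : Q.[x] == 0 by rewrite hr.
  by rewrite expr2 mulr0.
- by move=> x xs; rewrite /p horner_exp expf_neq0 // hr.
Qed.

Section Ortho.
Variable R : realType.
Variable w : R -> R.
Hypothesis hw : weight w.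
Variable n : nat.
Variable P : {poly R}.
Variable xi : 'I_n -> R.
Hypothesis hP : is_orthonormal_poly w n P.
Hypothesis hxi : forall j k : 'I_n, (j < k)%N -> xi j < xi k.
Hypothesis hroot : forall j, root P (xi j).

Local Notation Iw := (Iw w).

Lemma xi_le (j k : 'I_n) : (j <= k)%N -> xi j <= xi k.
Proof.
rewrite leq_eqVlt => /orP[/eqP jk|/hxi/ltW//].
by have -> : j = k by apply: val_inj.
Qed.

Lemma xi_inj : injective xi.
Proof.
move=> j k e; apply: val_inj; apply/eqP; rewrite eqn_leq; apply/andP; split;
  rewrite leqNgt; apply/negP => /hxi; rewrite e ltxx //.
Qed.

Definition Pi := \prod_(j < n) ('X - (xi j)%:P).

Lemma Pi_monic : Pi \is monic.
Proof. exact: monic_prod_XsubC. Qed.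

Lemma size_Pi : size Pi = n.+1.
Proof.
rewrite /Pi -big_enum size_prod_XsubC; by rewrite size_enum_ord.
Qed.

Lemma roots_div p : (forall j, p.[xi j] = 0) -> exists q, p = q * Pi.
Proof.
move=> hp.
have h1 : all (root p) (map xi (enum 'I_n)).
  by apply/allP => x /mapP[j _ ->]; apply/rootP.
have h2 : uniq_roots (map xi (enum 'I_n)).
  by rewrite uniq_rootsE map_inj_uniq ?enum_uniq //; exact: xi_inj.
have [q ->] := uniq_roots_prod_XsubC h1 h2.
by exists q; rewrite big_map big_enum.
Qed.

Lemma P_nz : P != 0.
Proof. by rewrite -size_poly_gt0 hP.1. Qed.

Lemma P_fact : P = lead_coef P *: Pi.
Proof.
have [q hq] := roots_div (fun j => rootP (hroot j)).
have q0 : q != 0 by apply: contraNneq P_nz => q0; rewrite hq q0 mul0r.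
have sq : size q = 1%N.
  have := hP.1; rewrite hq size_Mmonic // ?Pi_monic // size_Pi addnS /=.
  by move=> /eqP; rewrite -[n.+1]add1n eqn_add2r => /eqP.
rewrite hq (size1_polyC (eq_leq sq)) lead_coefM ?(monicP Pi_monic) mulr1.
by rewrite lead_coefC mul_polyC.
Qed.

Definition L (k : 'I_n) := \prod_(j < n | j != k) ('X - (xi j)%:P).

Lemma Pi_L k : Pi = ('X - (xi k)%:P) * L k.
Proof. by rewrite /Pi (bigD1 k). Qed.

Lemma L_root j k : j != k -> (L k).[xi j] = 0.
Proof.
move=> jk; rewrite /L horner_prod (bigD1 j) //= hornerXsubC subrr mul0r //.
Qed.

Lemma L_nz k : (L k).[xi k] != 0.
Proof.
rewrite /L horner_prod; apply/prodf_neq0 => j jk.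
rewrite hornerXsubC subr_eq0; apply/eqP => /xi_inj e; by rewrite e eqxx in jk.
Qed.

Lemma L_nz0 k : L k != 0.
Proof. by apply: contraNneq (L_nz k) => ->; rewrite horner0. Qed.

Lemma size_L k : size (L k) = n.
Proof.
have := size_Pi; rewrite (Pi_L k) size_mul ?polyXsubC_eq0 ?L_nz0 // size_XsubC.
by move=> [].
Qed.

Lemma P_L k : P = lead_coef P *: (('X - (xi k)%:P) * L k).
Proof. by rewrite -(Pi_L k) -P_fact. Qed.

Lemma lcP_gt0 : 0 < lead_coef P.
Proof. exact: hP.2.1. Qed.

Lemma orth (q : {poly R}) : (size q <= n)%N -> Iw (P * q) = 0.
Proof.
move=> sq; rewrite -(hP.2.2.1 q sq) /Iw /int11; apply: eq_Rintegral => t _.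
by rewrite hornerM.
Qed.

Lemma norm1 : Iw (P ^+ 2) = 1.
Proof.
rewrite -hP.2.2.2 /Iw /int11; apply: eq_Rintegral => t _.
by rewrite horner_exp.
Qed.


Definition lam (k : 'I_n) := Iw (L k) / (L k).[xi k].

Lemma quad (f : {poly R}) : (size f <= 2 * n)%N -> Iw f = \sum_(k < n) lam k * f.[xi k].
Proof.
move=> sf.
have P0 := P_nz.
set g := f %/ P; set h := f %% P.
have sP : size P = n.+1 by exact: hP.1.
have sg : (size g <= n)%N.
  by rewrite /g size_divp // sP /= leq_subLR addnn -mul2n.
have sh : (size h <= n)%N.
  by have := ltn_modp f P; rewrite P0 sP ltnS => ->.
have fE : f = g * P + h by exact: divp_eq.
have hxiE k : h.[xi k] = f.[xi k].
  by rewrite fE hornerD hornerM (rootP (hroot k)) mulr0 add0r.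
have hE : h = \sum_(k < n) (h.[xi k] / (L k).[xi k]) *: L k.
  apply/eqP; rewrite -subr_eq0; apply/eqP.
  apply: (@roots_geq_poly_eq0 _ _ (map xi (enum 'I_n))).
  - apply/allP => x /mapP[j _ ->]; apply/rootP.
    rewrite hornerD hornerN horner_sum (bigD1 j) //= big1 ?addr0.
      by rewrite hornerZ mulfVK ?L_nz // subrr.
    move=> k kj; have jk : j != k by rewrite eq_sym. by rewrite hornerZ (L_root jk) mulr0.
  - by rewrite map_inj_uniq ?enum_uniq //; exact: xi_inj.
  - rewrite size_map size_enum_ord; apply: (leq_trans (size_polyD _ _)).
    rewrite geq_max sh /= size_polyN; apply: (leq_trans (size_sum _ _ _)).
    apply/bigmax_leqP => k _; apply: (leq_trans (size_scale_leq _ _)).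
    by rewrite size_L.
rewrite {1}fE (IwD hw) [g * P]mulrC orth // add0r hE (Iw_sum hw); apply: eq_bigr => k _.
rewrite (IwZ hw) hxiE /lam; ring.
Qed.

Lemma lam_pos k : 0 < lam k.
Proof.
set c := lead_coef P; set a := xi k.
have hq : Iw (L k ^+ 2) = lam k * (L k).[xi k] ^+ 2.
  rewrite quad; last first.
    rewrite expr2; apply: (leq_trans (size_mul_leq _ _)); rewrite size_L.
    by rewrite mul2n -addnn; case: n.
  rewrite (bigD1 k) //= big1 ?addr0; first by rewrite horner_exp.
  by move=> j jk; rewrite horner_exp L_root // expr0n mulr0.
set B := 2 * (1 + a ^+ 2).
have hle : Iw (P ^+ 2) <= Iw ((c ^+ 2 * B) *: L k ^+ 2).
  apply: (Iw_le hw) => t It.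
  rewrite (P_L k) -/c hornerZ !horner_exp hornerZ hornerM hornerXsubC.
  have [h1 h2] : -1 <= t /\ t <= 1.
    by move: It; rewrite /I11 /= in_itv /= => /andP[].
  have hb : (t - a) ^+ 2 <= B.
    have ht2 : t ^+ 2 <= 1 by nra.
    have := sqr_ge0 (a + t); rewrite /B; nra.
  rewrite exprMn exprMn -mulrA ler_wpM2l ?sqr_ge0 //.
  by rewrite ler_wpM2r ?sqr_ge0.
rewrite norm1 (IwZ hw) hq in hle.
rewrite ltNge; apply/negP => hl.
have hc : 0 < c ^+ 2 * B.
  by rewrite mulr_gt0 // ?exprn_gt0 ?lcP_gt0 // /B mulr_gt0 // ltr_pwDl // sqr_ge0.
have hL := sqr_ge0 ((L k).[xi k]).
move: hle hc hL hl; set C := c ^+ 2 * B; set D := (L k).[xi k] ^+ 2; move=> hle hc hL hl.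
have : lam k * D <= 0 by nra.
nra.
Qed.

Lemma xi_in k : -1 < xi k < 1.
Proof.
set c := lead_coef P; set a := xi k.
have hc := lcP_gt0.
have hPL : forall t, P.[t] = c * (t - a) * (L k).[t].
  by move=> t; rewrite {1}(P_L k) hornerZ hornerM hornerXsubC mulrA.
have o : Iw (P * L k) = 0 by apply: orth; rewrite size_L.
have key : forall K : R, (forall t, (@I11 R) t -> (t - a) ^+ 2 <= K * (t - a)) ->
    False.
  move=> K he.
  have hle : Iw (P ^+ 2) <= Iw ((c * K) *: (P * L k)).
    apply: (Iw_le hw) => t It; rewrite horner_exp hornerZ hornerM !hPL.
    have h := he t It.
    set l := (L k).[t]; set u := t - a.
    have hl := sqr_ge0 (c * l).
    have -> : (c * u * l) ^+ 2 = (c * l) ^+ 2 * u ^+ 2 by ring.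
    have -> : c * K * (c * u * l * l) = (c * l) ^+ 2 * (K * u) by ring.
    by rewrite ler_wpM2l.
  by move: hle; rewrite norm1 (IwZ hw) o mulr0 ler10.
apply/andP; split; rewrite ltNge; apply/negP => ha.
- apply: (key (1 - a)) => t; rewrite /I11 /= in_itv /= => /andP[h1 h2]; nra.
- apply: (key (-1 - a)) => t; rewrite /I11 /= in_itv /= => /andP[h1 h2]; nra.
Qed.

Lemma I11E (t : R) : (@I11 R) t <-> -1 <= t <= 1.
Proof. by rewrite /I11 /= in_itv. Qed.

Lemma xi_I11 k : (@I11 R) (xi k).
Proof. by apply/I11E; have /andP[h1 h2] := xi_in k; rewrite !ltW. Qed.


Lemma Iw_pos (p : {poly R}) : p != 0 -> (size p <= 2 * n)%N ->
  (forall t, (@I11 R) t -> 0 <= p.[t]) -> 0 < Iw p.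
Proof.
move=> p0 sp hnn.
have hterm k : 0 <= lam k * p.[xi k].
  by apply: mulr_ge0; [exact: ltW (lam_pos k) | exact: hnn (xi_I11 k)].
rewrite quad // lt_neqAle sumr_ge0 ?andbT //; apply/negP => /eqP /esym H0.
have hz k : p.[xi k] = 0.
  have := @psumr_eq0P _ _ _ _ (fun k _ => hterm k) H0 k isT.
  by move/eqP; rewrite mulf_eq0 gt_eqF ?lam_pos //= => /eqP.
have [q hq] := roots_div hz.
have hq0 k : q.[xi k] = 0.
  have e : p = ('X - (xi k)%:P) * (q * L k) by rewrite hq (Pi_L k) mulrCA.
  have := @dbl_root R (q * L k) (xi k) (xi_in k).
  have hh : forall t : R, -1 <= t <= 1 -> 0 <= (('X - (xi k)%:P) * (q * L k)).[t].
    by move=> t /I11E ht; rewrite -e hnn.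
  move=> /(_ hh) /eqP; rewrite hornerM mulf_eq0 (negbTE (L_nz k)) orbF.
  by move/eqP.
have [q' hq'] := roots_div hq0.
have q'0 : q' != 0 by apply: contraNneq p0 => e; rewrite hq hq' e !mul0r.
have qP0 : q' * Pi != 0 by rewrite mulf_neq0 // monic_neq0 // Pi_monic.
move: sp; rewrite hq hq' (size_Mmonic qP0 Pi_monic) (size_Mmonic q'0 Pi_monic).
rewrite size_Pi !addnS /=.
rewrite mul2n -addnn -addnA -{2}[(n + n)%N]add0n leq_add2r leqn0 size_poly_eq0.
by rewrite (negbTE q'0).
Qed.

Lemma ratioE (p : {poly R}) : Defs.ratio w p = Iw ('X * p) / Iw p.
Proof.
rewrite /Defs.ratio /Iw; congr (_ / _); rewrite /int11; apply: eq_Rintegral => t _.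
by rewrite hornerM hornerX.
Qed.

Lemma sizeXp (p : {poly R}) : Spos n p -> (size ('X * p)%R <= 2 * n)%N.
Proof.
move=> [p0 [sp _]]; apply: (leq_trans (size_mul_leq _ _)); rewrite size_polyX.
case: n sp => [|m] sp; first by rewrite leqn0 size_poly_eq0 (negbTE p0) in sp.
by move: sp; rewrite -ltnS prednK // muln_gt0.
Qed.

Lemma ratio_bound (p : {poly R}) (i : 'I_n) (b : bool) : Spos n p ->
  (forall k : 'I_n, (if b then (i < k)%N else (k < i)%N) -> p.[xi k] = 0) ->
  (if b then Defs.ratio w p <= xi i else xi i <= Defs.ratio w p).
Proof.
move=> hS hz; have [p0 [sp hnn]] := hS.
have sp2 : (size p <= 2 * n)%N by apply: (leq_trans sp); rewrite leq_pred.
have D0 := Iw_pos p0 sp2 hnn.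
rewrite ratioE.
have hN : Iw ('X * p) - xi i * Iw p = \sum_(k < n) lam k * p.[xi k] * (xi k - xi i).
  rewrite (quad (sizeXp hS)) (quad sp2) mulr_sumr -sumrB; apply: eq_bigr => k _.
  by rewrite hornerM hornerX; ring.
have ht k : 0 <= lam k * p.[xi k] by apply: mulr_ge0; [exact: ltW (lam_pos k) | exact: hnn (xi_I11 k)].
case: b hz => hz.
- rewrite ler_pdivrMr // -subr_le0 hN.
  apply: sumr_le0 => k _; case: (ltnP i k) => ik; first by rewrite hz // mulr0 mul0r.
  by rewrite mulr_ge0_le0 // subr_le0 xi_le.
- rewrite ler_pdivlMr // -subr_ge0 hN.
  apply: sumr_ge0 => k _; case: (ltnP k i) => ik; first by rewrite hz // mulr0 mul0r.
  by rewrite mulr_ge0 // subr_ge0 xi_le.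
Qed.

Lemma ratioZ (a : R) (p : {poly R}) : a != 0 -> Defs.ratio w (a *: p) = Defs.ratio w p.
Proof.
by move=> a0; rewrite !ratioE -scalerAr !(IwZ hw) invfM mulrACA mulfV // mul1r.
Qed.

Lemma min_exists (m : nat) (z : 'I_m -> R) (p0 : {poly R}) : Spos n p0 ->
  (forall j, p0.[z j] = 0) -> exists mm, is_min (ratios w n z) mm.
Proof.
move=> hS0 hz0.
set N := (2 * n).-1.
pose Kset := [set c : 'rV[R]_N | `|c| = 1 /\ (forall t, (@I11 R) t -> 0 <= (pc c).[t])
   /\ (forall j, (pc c).[z j] = 0)].
have SposK c : Kset c -> Spos n (pc c).
  move=> [c1 [hnn _]]; split; [|split] => //; last exact: pc_size.
  apply/eqP => /pc_eq0 c0; move: c1; rewrite c0 normr0 => /esym/eqP.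
  by rewrite oner_eq0.
have IwX q c : Iw (q * pc c) = \sum_(i < N) c ord0 i * Iw (q * 'X^i).
  rewrite /pc mulr_sumr (Iw_sum hw); apply: eq_bigr => k _.
  by rewrite -scalerAr (IwZ hw).
pose g (c : 'rV[R]_N) := (\sum_(i < N) c ord0 i * Iw ('X * 'X^i)) /
   (\sum_(i < N) c ord0 i * Iw (1 * 'X^i)).
have gE c : g c = Defs.ratio w (pc c).
  by rewrite ratioE /g -!IwX mul1r.
have normalize p : Spos n p -> (forall j, p.[z j] = 0) ->
    exists c, Kset c /\ Defs.ratio w (pc c) = Defs.ratio w p.
  move=> hS hz; have sp : (size p <= N)%N := hS.2.1.
  set v := vc N p.
  have v0 : v != 0.
    apply: contraNneq hS.1 => e; rewrite -(pcK sp) -/v e.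
    by rewrite -(scale0r (0 : 'rV[R]_N)) pcZ scale0r.
  have s0 : `|v| != 0 by rewrite normr_eq0.
  exists (`|v|^-1 *: v); split; last by rewrite pcZ pcK // ratioZ // invr_eq0.
  rewrite /Kset /= pcZ pcK //.
  split; first by rewrite normrZ normfV normr_id mulVf.
  split => [t It|j]; rewrite hornerZ; last by rewrite hz mulr0.
  by rewrite mulr_ge0 ?invr_ge0 ?normr_ge0 // hS.2.2.
have Kcl : closed Kset.
  have -> : Kset = ((fun c : 'rV[R]_N => `|c|) @^-1` [set x | x = 1]) `&`
     ((\bigcap_(t in (@I11 R)) ((fun c : 'rV[R]_N => \sum_(i < N) c ord0 i * t ^+ i)
        @^-1` [set x | 0 <= x])) `&`
     (\bigcap_(j in setT) ((fun c : 'rV[R]_N => \sum_(i < N) c ord0 i * (z j) ^+ i)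
        @^-1` [set x | x = 0]))).
    apply/seteqP; split => c /=.
    - move=> [h1 [h2 h3]]; split; first exact: h1.
      split.
      + by move=> t It; rewrite /= -pc_horner; exact: h2.
      + by move=> j _; rewrite /= -pc_horner; exact: h3.
    - move=> [h1 [h2 h3]]; split=> //; split => [t It|j]; rewrite pc_horner.
        exact: h2.
      exact: h3.
  apply: closedI; last apply: closedI.
  - apply: preimage_closed; [move=> c _; exact: norm_continuous | exact: closed_eq].
  - apply: closed_bigI => t _; apply: preimage_closed; last exact: closed_ge.
    by move=> c _; exact: lin_cont.
  - apply: closed_bigI => j _; apply: preimage_closed; last exact: closed_eq.
    by move=> c _; exact: lin_cont.
have Kbd : bounded_set Kset.
  exists 1; split; first exact: num_real.
  by move=> M hM c /= [c1 _]; rewrite c1 ltW.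
have Kcpt : compact Kset := bounded_closed_compact Kbd Kcl.
have K0 : Kset !=set0.
  by have [c [Kc _]] := normalize p0 hS0 hz0; exists c.
have gcont : {within Kset, continuous g}.
  apply: continuous_in_subspaceT => c /set_mem Kc.
  have den0 : \sum_(i < N) c ord0 i * Iw (1 * 'X^i) != 0.
    rewrite -IwX mul1r; apply: lt0r_neq0; have hS := SposK c Kc.
    apply: Iw_pos; [exact: hS.1| |exact: hS.2.2].
    by apply: (leq_trans hS.2.1); rewrite leq_pred.
  apply: (continuousM (s := fun c : 'rV[R]_N => \sum_(i < N) c ord0 i * Iw ('X * 'X^i))
     (t := fun c : 'rV[R]_N => (\sum_(i < N) c ord0 i * Iw (1 * 'X^i))^-1)).
    exact: lin_cont.
  apply: continuousV => //; exact: lin_cont.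
have [c Kc hmin] := EVT_min_rV K0 Kcpt gcont.
exists (g c); split.
- have Kc' := set_mem Kc.
  exists (pc c); last by rewrite gE.
  by split; [exact: SposK | exact: Kc'.2.2].
- move=> y [p [Sp zp] <-]; have [c' [Kc' e]] := normalize p Sp zp.
  rewrite -e -gE; apply: hmin; exact: mem_set.
Qed.

Lemma main_in (i : 'I_n) :
  (forall z : 'I_i -> R, admissible z ->
     exists mm, is_min (ratios w n z) mm /\ mm <= xi i) /\
  (exists z : 'I_i -> R, admissible z /\ is_min (ratios w n z) (xi i)).
Proof.
have hin : (i < n)%N := ltn_ord i.
have n0 : (0 < n)%N by apply: leq_ltn_trans hin.
split.
- move=> z hz.
  pose s := map z (enum 'I_i) ++ map (fun k => xi (insubd i k)) (iota i.+1 (n - i.+1)).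
  have [p0 sz nn r0 _] := sqp_props s.
  move: p0 sz nn r0; set p := (\prod_(x <- s) ('X - x%:P)) ^+ 2 => p0 sz nn r0.
  have ss : size s = n.-1.
    rewrite /s size_cat !size_map -enumT size_enum_ord size_iota.
    lia.
  have hS : Spos n p.
    split => //; split; last by move=> t _; exact: nn.
    by rewrite sz ss prednK.
  have hzp j : p.[z j] = 0 by apply: r0; rewrite mem_cat map_f // mem_enum.
  have [mm hmm] := min_exists hS hzp.
  exists mm; split => //.
  apply: (le_trans (hmm.2 (Defs.ratio w p) _)).
    by exists p.
  apply: (ratio_bound (b := true) hS) => k ik; apply: r0.
  rewrite mem_cat; apply/orP; right; apply/mapP; exists (val k).
    by rewrite mem_iota ik /= subnKC.
  by rewrite valKd.
- pose z := fun j : 'I_i => xi (widen_ord (ltnW hin) j).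
  exists z; split.
    by split => [j|j k jk]; [exact: xi_in | exact: hxi].
  pose s := rem (xi i) (map xi (enum 'I_n)).
  have us : uniq (map xi (enum 'I_n)).
    by rewrite map_inj_uniq ?enum_uniq //; exact: xi_inj.
  have mems x : (x \in s) = (x != xi i) && (x \in map xi (enum 'I_n)).
    by rewrite /s (mem_rem_uniq _ us).
  have [p0 sz nn r0 rn] := sqp_props s.
  move: p0 sz nn r0 rn; set p := (\prod_(x <- s) ('X - x%:P)) ^+ 2 => p0 sz nn r0 rn.
  have ss : size s = n.-1.
    by rewrite /s size_rem ?map_f ?mem_enum // size_map size_enum_ord.
  have hS : Spos n p.
    split => //; split; last by move=> t _; exact: nn.
    by rewrite sz ss prednK.
  have hxk k : k != i -> p.[xi k] = 0.
    move=> ki; apply: r0; rewrite mems map_f ?mem_enum // andbT.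
    by apply: contra ki => /eqP /xi_inj ->.
  have hxi0 : p.[xi i] != 0 by apply: rn; rewrite mems eqxx.
  have hzp j : p.[z j] = 0.
    apply: hxk; apply/eqP => e; have := ltn_ord j.
    by rewrite -[nat_of_ord j]/(nat_of_ord (widen_ord (ltnW hin) j)) e ltnn.
  split.
  + exists p => //; apply/eqP; rewrite eq_le; apply/andP; split.
    * apply: (ratio_bound (b := true) hS) => k ik; apply: hxk.
      by apply/eqP => e; rewrite e ltnn in ik.
    * apply: (ratio_bound (b := false) hS) => k ik; apply: hxk.
      by apply/eqP => e; rewrite e ltnn in ik.
  + move=> y [q [Sq zq] <-]; apply: (ratio_bound (b := false) Sq) => k ki.
    have := zq (Ordinal ki); rewrite /z.
    by have -> : widen_ord (ltnW hin) (Ordinal ki) = k by apply: val_inj.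
Qed.

End Ortho.

Theorem lemma3p4 (R : realType) (w : R -> R) (n : nat) (P : {poly R})
    (xi : 'I_n -> R) (i : 'I_n) :
  weight w ->
  is_orthonormal_poly w n P ->
  (forall j k : 'I_n, (j < k)%N -> xi j < xi k) ->
  (forall j, root P (xi j)) ->
  (forall z : 'I_i -> R, admissible z ->
     exists m, is_min (ratios w n z) m /\ m <= xi i) /\
  (exists z : 'I_i -> R, admissible z /\ is_min (ratios w n z) (xi i)).
Proof.
move=> hw hP hxi hroot.
exact: (main_in hw hP hxi hroot i).
Qed.
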